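(* Let $G$ be a perfectly labeled graph on $[n]$. If $G$ is crossing closed, then $NC_G$ is a supersolvable lattice.
   Context: Graphs are finite simple graphs with vertex set $[n]$; edges are written $ij$ with $i<j$. Two edges $a_1a_2$ and $b_1b_2$ cross if $a_1<b_1<a_2<b_2$ or $b_1<a_1<b_2<a_2$. $G$ is perfectly labeled if whenever $ik,jk\in E(G)$ with $i<j<k$, also $ij\in E(G)$. A bond of $G$ is a spanning subgraph (identified with its edge set) each of whose connected components is an induced subgraph of $G$; it is noncrossing if there are no two distinct components with vertex sets $B,B'$ and $a,c\in B$, $b,d\in B'$, $a<b<c<d$. $NC_G$ is the poset of noncrossing bonds ordered by inclusion of edge sets. Two crossing edges $e,f$ are crossing closed if among all induced connected subgraphs of $G$ containing $e$ and $f$ there is a unique minimal one under containment; $G$ is crossing closed if every pair of crossing edges is. A finite lattice is supersolvable if it has a maximal chain $\mathbf{m}$ such that for every chain $\mathbf{c}$, the sublattice generated by $\mathbf{m}$ and $\mathbf{c}$ is distributive. *)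

(* Defs.v *)
From mathcomp Require Import all_boot.
Set Implicit Arguments. Unset Strict Implicit. Unset Printing Implicit Defensive.

Section Lat.
Variables (T : finType) (le : rel T) (P : {set T}).

Definition is_meet (x y z : T) : Prop :=
  [/\ z \in P, le z x, le z y & forall w, w \in P -> le w x -> le w y -> le w z].
Definition is_join (x y z : T) : Prop :=
  [/\ z \in P, le x z, le y z & forall w, w \in P -> le x w -> le y w -> le z w].

Definition is_lattice : Prop :=
  forall x y, x \in P -> y \in P -> (exists z, is_meet x y z) /\ (exists z, is_join x y z).

Definition lat_closed (Q : {set T}) : Prop :=
  forall x y z, x \in Q -> y \in Q -> (is_meet x y z \/ is_join x y z) -> z \in Q.

Definition in_gen_sublattice (S : {set T}) (x : T) : Prop :=
  x \in P /\ forall Q : {set T}, S \subset Q -> Q \subset P -> lat_closed Q -> x \in Q.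

Definition distributive_on (L : T -> Prop) : Prop :=
  forall x y z a b c d e, L x -> L y -> L z ->
    is_join y z a -> is_meet x a b -> is_meet x y c -> is_meet x z d -> is_join c d e ->
    b = e.

Definition is_chain (C : {set T}) : Prop :=
  C \subset P /\ forall x y, x \in C -> y \in C -> le x y || le y x.

Definition is_maximal_chain (C : {set T}) : Prop :=
  is_chain C /\ forall C', is_chain C' -> C \subset C' -> C' = C.

Definition supersolvable_lattice : Prop :=
  is_lattice /\
  exists M : {set T}, is_maximal_chain M /\
    forall C : {set T}, is_chain C -> distributive_on (in_gen_sublattice (M :|: C)).
End Lat.

Section Graphs.
Variable n : nat.
Notation V := 'I_n.
Notation edges := {set V * V}.

Definition simple_graph (G : edges) : Prop := forall e, e \in G -> (e.1 < e.2)%N.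

Definition adj (B : edges) : rel V := fun u v => ((u, v) \in B) || ((v, u) \in B).

Definition perfectly_labeled (G : edges) : Prop :=
  forall i j k : V, (i < j)%N -> (j < k)%N -> (i, k) \in G -> (j, k) \in G -> (i, j) \in G.

(* B is a bond of G: B is a spanning subgraph whose components are induced subgraphs of G *)
Definition is_bond (G B : edges) : bool :=
  (B \subset G) &&
  [forall u : V, forall v : V,
     (connect (adj B) u v && ((u, v) \in G)) ==> ((u, v) \in B)].

Definition noncrossing (B : edges) : bool :=
  [forall a : V, forall b : V, forall c : V, forall d : V,
     [&& (a < b)%N, (b < c)%N, (c < d)%N, connect (adj B) a c & connect (adj B) b d]
       ==> connect (adj B) a b].

Definition NC (G : edges) : {set edges} := [set B | is_bond G B && noncrossing B].
Definition incl : rel edges := fun B1 B2 => B1 \subset B2.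

Definition edges_cross (e f : V * V) : bool :=
  [&& (e.1 < f.1)%N, (f.1 < e.2)%N & (e.2 < f.2)%N] ||
  [&& (f.1 < e.1)%N, (e.1 < f.2)%N & (f.2 < e.2)%N].

Definition induced_connected (G : edges) (W : {set V}) : Prop :=
  forall u v, u \in W -> v \in W ->
    connect (fun x y => [&& x \in W, y \in W & adj G x y]) u v.

Definition contains_edge (W : {set V}) (e : V * V) : bool := (e.1 \in W) && (e.2 \in W).

Definition icsub (G : edges) (e f : V * V) (W : {set V}) : Prop :=
  [/\ contains_edge W e, contains_edge W f & induced_connected G W].

Definition minimal_icsub G e f (W : {set V}) : Prop :=
  icsub G e f W /\ forall W', icsub G e f W' -> W' \subset W -> W' = W.

Definition crossing_closed_pair (G : edges) (e f : V * V) : Prop :=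
  exists W, minimal_icsub G e f W /\ forall W', minimal_icsub G e f W' -> W' = W.

Definition crossing_closed (G : edges) : Prop :=
  forall e f, e \in G -> f \in G -> edges_cross e f -> crossing_closed_pair G e f.
End Graphs.

(* Main.v *)
Require Import Defs.
From mathcomp Require Import all_boot zify.
From Stdlib Require Import Classical.
Set Implicit Arguments. Unset Strict Implicit. Unset Printing Implicit Defensive.

Lemma interleave (x y s t : nat) : x != y -> x != s -> x != t -> y != s -> y != t -> s != t ->
  ((x < s) (+) (y < s)) != ((x < t) (+) (y < t)) ->
  [&& minn x y < minn s t, minn s t < maxn x y & maxn x y < maxn s t] ||
  [&& minn s t < minn x y, minn x y < maxn s t & maxn s t < maxn x y].
Proof.
move=> *.
case: (ltnP x s) => ? /=; case: (ltnP y s) => ? /=; case: (ltnP x t) => ? /=; case: (ltnP y t) => ? //=; lia.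
Qed.

Lemma cross_low (a1 a2 b1 b2 t : nat) : a1 < a2 -> b1 < b2 ->
  [&& a1 < b1, b1 < a2 & a2 < b2] || [&& b1 < a1, a1 < b2 & b2 < a2] ->
  a2 < t \/ b2 < t -> a1 < t /\ b1 < t.
Proof. move=> h1 h2 /orP[/and3P[c1 c2 c3]|/and3P[c1 c2 c3]] [h|h]; lia. Qed.

Lemma path_restrict (T : Type) (R R' : rel T) (P : T -> Prop) u p :
  (forall x y, P x -> R x y -> P y /\ R' x y) -> P u -> path R u p -> path R' u p.
Proof.
move=> H; elim: p u => [|y p IH] u //= Pu /andP[Ruy Hp].
have [Py R'uy] := H _ _ Pu Ruy.
by rewrite R'uy /= IH.
Qed.

Lemma path_last_inv (T : Type) (R : rel T) (P : T -> Prop) u p :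
  (forall x y, P x -> R x y -> P y) -> P u -> path R u p -> P (last u p).
Proof.
move=> H; elim: p u => [|y p IH] u //= Pu /andP[Ruy Hp].
exact: IH (H _ _ Pu Ruy) Hp.
Qed.

Section Main.
Variable n : nat.
Local Notation V := ('I_n).
Local Notation edges := {set V * V}.

Lemma adj_sym (B : edges) : symmetric (adj B).
Proof. by move=> x y; rewrite /adj orbC. Qed.

Lemma connect_symB (B : edges) x y : connect (adj B) x y = connect (adj B) y x.
Proof. exact: (sym_connect_sym (adj_sym B)). Qed.

Lemma adj_sub (B B' : edges) : B \subset B' -> forall x y, adj B x y -> adj B' x y.
Proof.
move=> /subsetP sBB' x y /orP[h|h]; apply/orP; [left|right]; exact: sBB'.
Qed.

Lemma connect_subB (B B' : edges) : B \subset B' -> forall x y, connect (adj B) x y -> connect (adj B') x y.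
Proof.
move=> sBB'; apply: connect_sub => x y h; apply: connect1; exact: adj_sub h.
Qed.

Lemma connect_edge (B : edges) e : e \in B -> connect (adj B) e.1 e.2.
Proof. by move=> h; apply: connect1; rewrite /adj -surjective_pairing h. Qed.

Fixpoint sp (z : nat) (x : V) (p : seq V) : bool :=
  if p is y :: p' then ((x < z) (+) (y < z)) (+) sp z y p' else false.

Lemma sp_tele z x p : sp z x p = (x < z) (+) (last x p < z).
Proof.
elim: p x => [|y p IH] x /=; first by rewrite addbb.
by rewrite IH addbA -(addbA (x < z)) addbb addbF.
Qed.

Lemma sp_diff (R : rel V) s t x p : path R x p -> sp s x p != sp t x p ->
  exists x' y', [/\ x' \in x :: p, y' \in x :: p, R x' y' &
     ((x' < s) (+) (y' < s)) != ((x' < t) (+) (y' < t))].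
Proof.
elim: p x => [|y p IH] x //= /andP[Rxy Hp] hd.
case: (boolP (((x < s) (+) (y < s)) != ((x < t) (+) (y < t)))) => h.
  by exists x, y; split=> //; rewrite !inE eqxx ?orbT.
have e: ((x < s) (+) (y < s)) = ((x < t) (+) (y < t)) by apply/eqP; rewrite -[_ == _]negbK h.
move: hd; rewrite e => hd.
have hd' : sp s y p != sp t y p by apply: contra hd => /eqP ->.
have [x' [y' [h1 h2 h3 h4]]] := IH y Hp hd'.
by exists x', y'; split=> //; rewrite inE ?h1 ?h2 orbT.
Qed.

Lemma sq_diff (R : rel V) (f : V -> bool) b q : path R b q -> f b != f (last b q) ->
  exists s t, [/\ s \in b :: q, t \in b :: q, R s t & f s != f t].
Proof.
elim: q b => [|y q IH] b /=; first by rewrite eqxx.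
move=> /andP[Rby Hq] hd.
case: (boolP (f b != f y)) => h.
  by exists b, y; split=> //; rewrite !inE eqxx ?orbT.
have e : f b = f y by apply/eqP; rewrite -[_ == _]negbK h.
rewrite e in hd.
have [s [t [h1 h2 h3 h4]]] := IH y Hq hd.
by exists s, t; split=> //; rewrite inE ?h1 ?h2 orbT.
Qed.


Lemma adj_edge (K : edges) x y : simple_graph K -> adj K x y ->
  exists e, [/\ e \in K, (e.1 : nat) = minn x y, (e.2 : nat) = maxn x y & e.1 \in [:: x; y]].
Proof.
move=> sK /orP[h|h].
  exists (x, y); have /= := sK _ h => lt; split=> //=; [lia|lia|by rewrite inE eqxx].
exists (y, x); have /= := sK _ h => lt; split=> //=; [lia|lia|by rewrite !inE eqxx orbT].
Qed.

Lemma adj_irr (K : edges) x : simple_graph K -> ~~ adj K x x.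
Proof. by move=> sK; apply/negP => /orP[] h; have /= := sK _ h; rewrite ltnn. Qed.

Lemma nc_of_cross (K : edges) : simple_graph K ->
  (forall e f, e \in K -> f \in K -> edges_cross e f -> connect (adj K) e.1 f.1) ->
  forall a b c d : V, a < b -> b < c -> c < d ->
  connect (adj K) a c -> connect (adj K) b d -> connect (adj K) a b.
Proof.
move=> sK Hc a b c d lab lbc lcd /connectP[p Hp ec] /connectP[q Hq dq].
apply/idPn => nab.
have hd : sp b a p != sp d a (p) :> bool.
  rewrite !sp_tele -ec; rewrite lab (ltn_trans lab (ltn_trans lbc lcd)).
  by rewrite (leq_gtF (ltnW lbc)) lcd.
have hd2 : sp b a p != sp (last b q) a p by rewrite -dq.
have [s [t [hs ht Rst hst]]] := sq_diff (f := fun z => sp z a p) Hq hd2.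
have [x' [y' [hx hy Rxy hxy]]] := sp_diff Hp hst.
have cx := path_connect Hp hx; have cy := path_connect Hp hy.
have cs := path_connect Hq hs; have ct := path_connect Hq ht.
have nab' : forall u v, connect (adj K) a u -> connect (adj K) b v -> u != v.
  move=> u v cu cv; apply/eqP => euv; subst v; move: nab; apply/negP/negPn.
  by apply: connect_trans cu _; rewrite connect_symB.
have ne1 := nab' _ _ cx cs; have ne2 := nab' _ _ cx ct.
have ne3 := nab' _ _ cy cs; have ne4 := nab' _ _ cy ct.
have nxy : x' != y' by apply/eqP => e; move: Rxy; rewrite e; apply/negP/adj_irr.
have nst : s != t by apply/eqP => e; move: Rst; rewrite e; apply/negP/adj_irr.
have := interleave (x := x') (y := y') (s := s) (t := t).
rewrite !(inj_eq val_inj) => /(_ nxy ne1 ne2 ne3 ne4 nst hxy) hcr.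
have [e [eK e1 e2 ein]] := adj_edge sK Rxy.
have [f [fK f1 f2 fin]] := adj_edge sK Rst.
have := Hc e f eK fK; rewrite /edges_cross e1 e2 f1 f2 => /(_ hcr) cef.
move: nab; apply/negP/negPn.
have ca : connect (adj K) a e.1 by move: ein; rewrite !inE => /orP[] /eqP ->.
have cb : connect (adj K) b f.1 by move: fin; rewrite !inE => /orP[] /eqP ->.
apply: connect_trans ca (connect_trans cef _); by rewrite connect_symB.
Qed.


Variable G : edges.
Hypothesis Gs : simple_graph G.
Hypothesis Gpl : perfectly_labeled G.
Hypothesis Gcc : crossing_closed G.

Definition rW (W : {set V}) : rel V := fun x y => [&& x \in W, y \in W & adj G x y].

Lemma remove_simpl (S : {set V}) s :
  (forall x y, rW S x s -> rW S s y -> x = y \/ rW S x y) ->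
  forall a b, a != s -> b != s -> connect (rW S) a b -> connect (rW (S :\ s)) a b.
Proof.
move=> Hs a b nas nbs /connectP[p Hp eb]; subst b.
elim: {p}(size p) {-2}p (leqnn (size p)) a nas Hp nbs => [|m IH] p.
  by rewrite leqn0 => /nilP -> a.
case: p => [|y p] /=; first by move=> *; exact: connect0.
move=> sz a nas /andP[Ray Hp] nls.
case: (eqVneq y s) => [eys|nys].
  subst y; case: p sz Hp nls => [|z p] /= sz; first by rewrite eqxx.
  move=> /andP[Rsz Hp] nls.
  have nzs : z != s by apply/eqP => e; move: Rsz; rewrite e /rW => /and3P[_ _]; apply/negP/adj_irr.
  case: (Hs _ _ Ray Rsz) => [eaz|Raz].
    subst z; exact: IH p (ltnW sz) a nas Hp nls.
  apply: connect_trans (connect1 _) (IH p (ltnW sz) z nzs Hp nls).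
  by move: Raz; rewrite /rW !inE nas nzs /=.
apply: connect_trans (connect1 _) (IH p sz y nys Hp nls).
by move: Ray; rewrite /rW !inE nas nys /=.
Qed.

Lemma shorten (W : {set V}) (t : nat) (a b : V) : a < t -> b < t ->
  connect (rW W) a b -> connect (rW [set x in W | x < t]) a b.
Proof.
move=> ha hb.
suff H : forall j, connect (rW [set x in W | x < t + j]) a b -> connect (rW [set x in W | x < t]) a b.
  move=> c; apply: (H n); congr (connect (rW _) a b) : c.
  by apply/setP => x; rewrite inE; have := ltn_ord x; case: (x \in W) => //= xn; apply/esym; lia.
elim=> [|j IH]; first by rewrite addn0.
move=> c; apply: IH.
case: (ltnP (t + j) n) => [lt|ge]; last first.
  congr (connect (rW _) a b) : c; apply/setP => x; rewrite !inE; have := ltn_ord x.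
  by case: (x \in W) => //= xn; lia.
pose s := Ordinal lt.
have -> : [set x in W | x < t + j] = [set x in W | x < t + j.+1] :\ s.
  apply/setP => x; rewrite !inE -(inj_eq val_inj) /=.
  by case: (x \in W); rewrite ?andbF //=; lia.
apply: remove_simpl; last exact: c; last by rewrite -(inj_eq val_inj) /=; lia.
  2: by rewrite -(inj_eq val_inj) /=; lia.
move=> x y; rewrite /rW !inE => /and3P[/andP[xW xt] _ axs] /and3P[_ /andP[yW yt] asy].
have xs : x < s.
  have : x != s by apply/eqP => e; move: axs; rewrite e; apply/negP/adj_irr.
  rewrite -(inj_eq val_inj) /=; lia.
have ys : y < s.
  have : y != s by apply/eqP => e; move: asy; rewrite e; apply/negP/adj_irr.
  rewrite -(inj_eq val_inj) /=; lia.
have xsG : (x, s) \in G.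
  move: axs; rewrite /adj => /orP[] h //; have /= := Gs h; lia.
have ysG : (y, s) \in G.
  move: asy; rewrite /adj => /orP[] h //; have /= := Gs h; lia.
case: (ltngtP x y) => [xy|yx|exy]; last by left; apply: val_inj.
  right; rewrite xW yW xt yt /=; apply/orP; left; exact: Gpl xy ys xsG ysG.
right; rewrite xW yW xt yt /=; apply/orP; right; exact: Gpl yx xs ysG xsG.
Qed.


Definition xk (t : nat) : edges := [set e in G | e.2 < t].
Definition blk (B : edges) (r : V) : {set V} := [set z | connect (adj B) r z].

Lemma simple_sub (B : edges) : B \subset G -> simple_graph B.
Proof. by move=> /subsetP s e /s; apply: Gs. Qed.

Lemma NC_intro (B : edges) : B \subset G ->
  (forall u v, connect (adj B) u v -> (u, v) \in G -> (u, v) \in B) ->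
  (forall a b c d : V, a < b -> b < c -> c < d ->
     connect (adj B) a c -> connect (adj B) b d -> connect (adj B) a b) ->
  B \in NC G.
Proof.
move=> sBG hb hn; rewrite inE; apply/andP; split.
  rewrite /is_bond sBG /=; apply/forallP => u; apply/forallP => v; apply/implyP => /andP[].
  exact: hb.
apply/forallP => a; apply/forallP => b; apply/forallP => c; apply/forallP => d.
apply/implyP => /and5P[h1 h2 h3 h4 h5]; exact: hn h4 h5.
Qed.

Lemma NC_sub (B : edges) : B \in NC G -> B \subset G.
Proof. by rewrite inE => /andP[/andP[]]. Qed.

Lemma NC_bond (B : edges) u v : B \in NC G -> connect (adj B) u v -> (u, v) \in G -> (u, v) \in B.
Proof.
rewrite inE => /andP[/andP[_ /forallP H] _] c g.
by have /forallP /(_ v) /implyP := H u; apply; rewrite c g.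
Qed.

Lemma NC_nc (B : edges) (a b c d : V) : B \in NC G -> a < b -> b < c -> c < d ->
  connect (adj B) a c -> connect (adj B) b d -> connect (adj B) a b.
Proof.
rewrite inE => /andP[_ /forallP H] h1 h2 h3 h4 h5.
have /forallP /(_ b) /forallP /(_ c) /forallP /(_ d) /implyP := H a; apply.
by rewrite h1 h2 h3 h4 h5.
Qed.

Lemma adj_of_bond (B : edges) x y : B \in NC G -> connect (adj B) x y -> adj G x y -> adj B x y.
Proof.
move=> hB c /orP[h|h]; apply/orP; [left|right]; apply: NC_bond => //.
by rewrite connect_symB.
Qed.

Lemma cross_same_block (B : edges) e f : B \in NC G -> e \in B -> f \in B -> edges_cross e f ->
  connect (adj B) e.1 f.1.
Proof.
move=> hB eB fB /orP[/and3P[h1 h2 h3]|/and3P[h1 h2 h3]].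
  exact: NC_nc hB h1 h2 h3 (connect_edge eB) (connect_edge fB).
by rewrite connect_symB; exact: NC_nc hB h1 h2 h3 (connect_edge fB) (connect_edge eB).
Qed.

Lemma low_connect (W : {set V}) (t : nat) (u v : V) : induced_connected G W ->
  u \in W -> v \in W -> u < t -> v < t -> connect (adj (xk t)) u v.
Proof.
move=> hW uW vW ut vt.
have := shorten ut vt (hW u v uW vW).
apply: connect_sub => x y; rewrite /rW !inE => /and3P[/andP[_ xt] /andP[_ yt] /orP[h|h]];
  apply: connect1; apply/orP; [left|right]; by rewrite inE h.
Qed.

Lemma cc_W e f : e \in G -> f \in G -> edges_cross e f -> exists W, icsub G e f W.
Proof. by move=> eG fG cr; have [W [[h _] _]] := Gcc eG fG cr; exists W. Qed.

Lemma blk_induced (B : edges) r : B \subset G -> induced_connected G (blk B r).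
Proof.
move=> sBG u v; rewrite /blk !inE => cu cv.
have : connect (adj B) u v by apply: connect_trans _ cv; rewrite connect_symB.
move=> /connectP[p Hp ->]; apply/connectP; exists p => //.
apply: (path_restrict (P := fun z => z \in blk B r)) Hp; last by rewrite /blk inE cu.
move=> x y; rewrite /blk !inE => cx axy; split; first exact: connect_trans cx (connect1 axy).
rewrite cx (connect_trans cx (connect1 axy)) /=.
exact: adj_sub sBG _ _ axy.
Qed.

Lemma G_NC : G \in NC G.
Proof.
apply: NC_intro => //; apply: nc_of_cross => // e f eG fG cr.
have [W [[/andP[e1 _] /andP[f1 _] hW]]] := cc_W eG fG cr.
apply: connect_sub (hW _ _ e1 f1) => x y /and3P[_ _ h]; exact: connect1.
Qed.

Lemma xk_sub t : xk t \subset G.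
Proof. by apply/subsetP => e; rewrite inE => /andP[]. Qed.

Lemma xk_NC t : xk t \in NC G.
Proof.
apply: NC_intro; first exact: xk_sub.
  move=> u v c uvG; rewrite inE uvG /=.
  have uv : u < v := Gs uvG.
  case: (ltnP v t) => // vt.
  have : connect (adj (xk t)) v u by rewrite connect_symB.
  move=> /connectP[p Hp eu].
  have hl : last v p = v.
    apply: (path_last_inv (P := fun z => z = v)) Hp => // x y -> /orP[] h; exfalso; move: h;
      rewrite inE => /andP[h1 /= h2]; have /= := Gs h1; lia.
  by move: uv; rewrite eu hl ltnn.
apply: nc_of_cross; first exact: simple_sub (xk_sub t).
move=> e f; rewrite !inE => /andP[eG et] /andP[fG ft] cr.
have [W [/andP[e1 e2] /andP[f1 f2] hW]] := cc_W eG fG cr.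
apply: low_connect hW e1 f1 _ _.
  by have h := Gs eG; exact: ltn_trans h et.
by have h := Gs fG; exact: ltn_trans h ft.
Qed.


Lemma min_below e f W0 : icsub G e f W0 -> exists W, minimal_icsub G e f W /\ W \subset W0.
Proof.
elim: {W0}#|W0| {-2}W0 (leqnn #|W0|) => [|m IH] W0.
  rewrite leqn0 => /eqP /cards0_eq -> [/andP[]]; by rewrite inE.
move=> sz hW0.
case: (classic (forall W', icsub G e f W' -> W' \subset W0 -> W' = W0)) => H.
  by exists W0; split.
have [W' hW'] : exists W', ~ (icsub G e f W' -> W' \subset W0 -> W' = W0).
  by apply: not_all_ex_not.
have h1 : icsub G e f W' by apply: NNPP => h; apply: hW' => /h.
have h2 : W' \subset W0 by apply: NNPP => h; apply: hW' => _ /h.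
have h3 : W' <> W0 by move=> e3; apply: hW' => _ _.
have lt : #|W'| < #|W0|.
  by apply: proper_card; rewrite properEneq h2 andbT; apply/eqP.
have [W [hW sW]] := IH W' (leq_trans lt sz) h1 .
by exists W; split => //; apply: subset_trans sW h2.
Qed.


Lemma blk_sub_conn (B : edges) r x y : x \in blk B r -> y \in blk B r -> connect (adj B) x y.
Proof. rewrite /blk !inE => cx cy; apply: connect_trans cy; by rewrite connect_symB. Qed.

Lemma meet_NC (X Y : edges) : X \in NC G -> Y \in NC G -> X :&: Y \in NC G.
Proof.
move=> hX hY.
have sXG := NC_sub hX; have sYG := NC_sub hY.
have sI : X :&: Y \subset G by apply: subset_trans (subsetIl _ _) sXG.
apply: NC_intro => //.
  move=> u v c g; rewrite inE; apply/andP; split; apply: NC_bond => //.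
    exact: connect_subB (subsetIl _ _) _ _ c.
  exact: connect_subB (subsetIr _ _) _ _ c.
apply: nc_of_cross; first exact: simple_sub.
move=> e f; rewrite !inE => /andP[eX eY] /andP[fX fY] cr.
have eG : e \in G by apply: (subsetP sXG).
have fG : f \in G by apply: (subsetP sXG).
have [W0 [[[/andP[e1 e2] /andP[f1 f2] hW0] _] uniq]] := Gcc eG fG cr.
have inblk : forall Z, Z \in NC G -> e \in Z -> f \in Z -> W0 \subset blk Z e.1.
  move=> Z hZ eZ fZ.
  have ic : icsub G e f (blk Z e.1).
    have cf := cross_same_block hZ eZ fZ cr.
    split; rewrite /contains_edge /blk ?inE ?connect0 ?(connect_edge eZ) ?cf //=.
      exact: connect_trans cf (connect_edge fZ).
    exact: blk_induced (NC_sub hZ).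
  have [W1 [m1 s1]] := min_below ic.
  by rewrite -(uniq _ m1).
have sA := inblk X hX eX fX; have sB := inblk Y hY eY fY.
apply: connect_sub (hW0 _ _ e1 f1) => x y /and3P[xW yW axy]; apply: connect1.
have cX : connect (adj X) x y by apply: blk_sub_conn (subsetP sA _ xW) (subsetP sA _ yW).
have cY : connect (adj Y) x y by apply: blk_sub_conn (subsetP sB _ xW) (subsetP sB _ yW).
case/orP: axy => h; apply/orP; [left|right]; rewrite inE; apply/andP; split; apply: NC_bond => //;
  by rewrite connect_symB.
Qed.


Definition U (p : edges) (t : nat) : edges := [set e in G | connect (adj (p :|: xk t)) e.1 e.2].

Lemma U_conn (p : edges) t x y : p \in NC G ->
  connect (adj (U p t)) x y = connect (adj (p :|: xk t)) x y.
Proof.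
move=> hp; apply/idP/idP.
  apply: connect_sub => u v /orP[] h; move: h; rewrite inE => /andP[_ c] //.
  by rewrite connect_symB.
apply: connect_subB; apply/subsetP => e eK; rewrite inE (connect_edge eK) andbT.
move: eK; rewrite inE => /orP[h|h]; first exact: (subsetP (NC_sub hp)).
exact: (subsetP (xk_sub t)).
Qed.

Lemma U_sub p t : U p t \subset G.
Proof. by apply/subsetP => e; rewrite inE => /andP[]. Qed.

Lemma K_sub p t : p \in NC G -> p :|: xk t \subset G.
Proof. by move=> hp; rewrite subUset NC_sub // xk_sub. Qed.

Lemma U_NC p t : p \in NC G -> U p t \in NC G.
Proof.
move=> hp; apply: NC_intro; first exact: U_sub.
  by move=> u v; rewrite U_conn // => c g; rewrite inE g c.
move=> a b c d h1 h2 h3; rewrite !U_conn //; move: a b c d h1 h2 h3.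
apply: nc_of_cross; first exact: simple_sub (K_sub t hp).
move=> e f eK fK cr.
have eG : e \in G by apply: (subsetP (K_sub t hp)).
have fG : f \in G by apply: (subsetP (K_sub t hp)).
case: (boolP ((e \in p) && (f \in p))) => [/andP[ep fp]|hnp].
  exact: connect_subB (subsetUl _ _) _ _ (cross_same_block hp ep fp cr).
have [lo1 lo2] : e.1 < t /\ f.1 < t.
  have l1 := Gs eG; have l2 := Gs fG.
  have H : e.2 < t \/ f.2 < t.
    move: eK fK hnp; rewrite !inE.
    case: (e \in p) => /=; case: (f \in p) => //=.
    - by move=> _ /andP[_ h] _; right.
    - by move=> /andP[_ h] _ _; left.
    - by move=> /andP[_ h] _ _; left.
  exact: cross_low l1 l2 cr H.
have [W [/andP[e1 _] /andP[f1 _] hW]] := cc_W eG fG cr.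
exact: connect_subB (subsetUr _ _) _ _ (low_connect hW e1 f1 lo1 lo2).
Qed.


Definition lub (F : {set edges}) : edges :=
  G :&: \bigcap_(Z | (Z \in NC G) && [forall g in F, g \subset Z]) Z.

Lemma lub_NC (F : {set edges}) : lub F \in NC G.
Proof.
rewrite /lub; apply: (big_rec (fun X => G :&: X \in NC G)); first by rewrite setIT G_NC.
move=> Z X /andP[hZ _] hX.
have -> : G :&: (Z :&: X) = Z :&: (G :&: X).
  by rewrite setIA (setIC G) -setIA; congr (_ :&: _); apply/setIidPr; exact: NC_sub hZ.
exact: meet_NC.
Qed.

Lemma lub_ub (F : {set edges}) (g : edges) : g \in F -> g \subset G -> g \subset lub F.
Proof.
move=> gF gG; rewrite subsetI gG; apply/bigcapsP => Z /andP[_ /forallP H].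
exact: (implyP (H g) gF).
Qed.

Lemma lub_least (F : {set edges}) (Z : edges) : Z \in NC G -> (forall g, g \in F -> g \subset Z) -> lub F \subset Z.
Proof.
move=> hZ H; apply: subset_trans (subsetIr _ _) (bigcap_inf _ _).
by rewrite hZ /=; apply/forallP => g; apply/implyP; exact: H.
Qed.

Lemma lub_mono (F F' : {set edges}) : F \subset F' -> {subset F <= NC G} -> lub F \subset lub F'.
Proof.
move=> sF hF; apply: lub_least; first exact: lub_NC.
move=> g gF; apply: lub_ub; first exact: (subsetP sF).
exact: NC_sub (hF _ gF).
Qed.

Lemma NC_lattice : is_lattice (@incl n) (NC G).
Proof.
move=> X Y hX hY; split.
  exists (X :&: Y); split; rewrite /incl ?subsetIl ?subsetIr ?meet_NC //.
  by move=> w _ h1 h2; rewrite subsetI h1 h2.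
exists (lub [set X; Y]); split; rewrite /incl ?lub_NC //.
- by apply: lub_ub; rewrite ?inE ?eqxx ?NC_sub.
- by apply: lub_ub; rewrite ?inE ?eqxx ?orbT ?NC_sub.
- move=> w hw h1 h2; apply: lub_least => // g; rewrite !inE => /orP[] /eqP -> //.
Qed.


Lemma xk_mono i j : i <= j -> xk i \subset xk j.
Proof. by move=> ij; apply/subsetP => e; rewrite !inE => /andP[-> h] /=; exact: leq_trans h ij. Qed.

Lemma xk0 : xk 0 = set0.
Proof. by apply/setP => e; rewrite !inE ltn0 andbF. Qed.

Lemma xkn : xk n = G.
Proof. by apply/setP => e; rewrite !inE ltn_ord andbT. Qed.

Lemma PL_adj (x y z : V) : (x, z) \in G -> (y, z) \in G -> x != y -> adj G x y.
Proof.
move=> xz yz nxy; have /= lx := Gs xz; have /= ly := Gs yz.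
case: (ltngtP x y) => [h|h|h]; rewrite /adj.
- by rewrite (Gpl h ly xz yz).
- by rewrite (Gpl h lx yz xz) orbT.
- by move: nxy; rewrite -(inj_eq val_inj) /= h eqxx.
Qed.

Lemma cover k (y : edges) : y \in NC G -> xk k \subset y -> y \subset xk k.+1 ->
  y = xk k \/ y = xk k.+1.
Proof.
move=> hy s1 s2.
case: (boolP (y \subset xk k)) => hk; first by left; apply/eqP; rewrite eqEsubset hk s1.
right; apply/eqP; rewrite eqEsubset s2 /=.
have [e ey nek] : exists2 e, e \in y & e \notin xk k.
  by move/subsetPn: hk => [e h1 h2]; exists e.
have eG : e \in G := subsetP (NC_sub hy) e ey.
have e2k : (e.2 : nat) = k.
  have := subsetP s2 e ey; move: nek; rewrite !inE eG /= => h1 h2; apply/eqP; rewrite eqn_leq; apply/andP; split; [by rewrite -ltnS | by rewrite leqNgt].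
apply/subsetP => f; rewrite inE => /andP[fG fk].
case: (ltnP f.2 k) => fk'; first by apply: (subsetP s1); rewrite inE fG fk'.
have f2k : f.2 = e.2 by apply: val_inj => /=; rewrite e2k; apply/eqP; rewrite eqn_leq fk' andbT -ltnS.
have ce : connect (adj y) e.1 e.2 := connect_edge ey.
case: (eqVneq e.1 f.1) => [e1f1|ne].
  by have -> : f = e by rewrite [f]surjective_pairing [e]surjective_pairing -e1f1 f2k.
have : adj G e.1 f.1.
  apply: (PL_adj (z := e.2)); first by rewrite -surjective_pairing.
  by rewrite -f2k -surjective_pairing.
  done.
have e1k : e.1 < k by rewrite -e2k; exact: Gs eG.
have f1k : f.1 < k by have := Gs fG; rewrite f2k e2k.
move=> a; have ay : adj y e.1 f.1.
  by case/orP: a => h; apply/orP; [left|right]; apply: (subsetP s1); rewrite inE h /=.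
rewrite [f]surjective_pairing; apply: NC_bond => //; last by rewrite -surjective_pairing.
rewrite f2k; apply: connect_trans _ ce; rewrite connect_symB; exact: connect1.
Qed.

Definition Mch : {set edges} := [set xk i | i : 'I_n.+1].

Lemma Mch_chain : is_chain (@incl n) (NC G) Mch.
Proof.
split.
  by apply/subsetP => x /imsetP[i _ ->]; exact: xk_NC.
move=> x y /imsetP[i _ ->] /imsetP[j _ ->]; rewrite /incl.
by case: (leqP i j) => h; [rewrite xk_mono | rewrite (xk_mono (ltnW h)) orbT].
Qed.

Lemma Mch_max : is_maximal_chain (@incl n) (NC G) Mch.
Proof.
split; first exact: Mch_chain.
move=> C' [sC' hC'] sM; apply/eqP; rewrite eqEsubset sM andbT.
apply/subsetP => y yC.
have hy : y \in NC G := subsetP sC' y yC.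
have Pn : exists k, y \subset xk k by exists n; rewrite xkn NC_sub.
have [k yk kmin] := ex_minnP Pn.
have kn : k <= n by apply: kmin; rewrite xkn NC_sub.
case: k yk kmin kn => [|k] yk kmin kn.
  have -> : y = xk 0 by apply/eqP; rewrite eqEsubset yk xk0 sub0set.
  by apply/imsetP; exists ord0.
have nk : ~~ (y \subset xk k) by apply/negP => h; have := kmin _ h; rewrite ltnn.
have xkC : xk k \in C' by apply: (subsetP sM); apply/imsetP; exists (inord k) => //; rewrite inordK //; lia.
have := hC' _ _ xkC yC; rewrite /incl (negbTE nk) orbF => s1.
case: (cover hy s1 yk) => ->; apply/imsetP.
  by exists (inord k) => //; rewrite inordK //; lia.
by exists (inord k.+1) => //; rewrite inordK //; lia.
Qed.


Definition S (x : edges) : {set V} := [set v | [exists w : V, (w, v) \in x]].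

Lemma S_mono (x y : edges) : x \subset y -> S x \subset S y.
Proof.
move=> sxy; apply/subsetP => v; rewrite !inE => /existsP[w h]; apply/existsP; exists w.
exact: (subsetP sxy).
Qed.

Lemma peo (B : edges) (v w : V) : B \in NC G -> connect (adj B) v w -> w < v ->
  exists w', (w', v) \in B.
Proof.
move=> hB c wv.
have hW := blk_induced (r := v) (NC_sub hB).
have vW : v \in blk B v by rewrite /blk inE connect0.
have wW : w \in blk B v by rewrite /blk inE.
have := shorten (ltnSn v) (ltnW wv : w < v.+1) (hW v w vW wW).
move=> /connectP[[|y p] /=].
  by move=> _ ew; rewrite -ew ltnn in wv.
move=> /andP[h _] _; move: h; rewrite /rW !inE => /and3P[_ /andP[yW yv] avy].
have nyv : y != v by apply/eqP => e; move: avy; rewrite e; apply/negP/adj_irr.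
have ylt : y < v by move: nyv; rewrite -(inj_eq val_inj) /= => h; rewrite ltn_neqAle h -ltnS.
exists y.
have yvG : (y, v) \in G.
  case/orP: avy => // h; have /= := Gs h => h'; by rewrite ltnNge (ltnW ylt) in h'.
apply: NC_bond => //; rewrite connect_symB; by move: yW; rewrite /blk ?inE.
Qed.

Lemma S_strict (x y : edges) : x \in NC G -> y \in NC G -> x \subset y -> S y \subset S x -> x = y.
Proof.
move=> hx hy sxy sS.
apply/eqP; rewrite eqEsubset sxy /=; apply/negPn/negP => /subsetPn [e0 e0y e0x].
have e0D : e0 \in y :\: x by rewrite inE e0y e0x.
have [e eD emin] := arg_minnP (fun e : V * V => (e.2 : nat)) e0D.
have [ey ex] : e \in y /\ e \notin x.
  have h : e \in y :\: x := eD. by move: h; rewrite inE => /andP[].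
have eG : e \in G := subsetP (NC_sub hy) e ey.
have : e.2 \in S x by apply: (subsetP sS); rewrite inE; apply/existsP; exists e.1; rewrite -surjective_pairing.
rewrite inE => /existsP[w wx].
have wy : (w, e.2) \in y := subsetP sxy _ wx.
have wG : (w, e.2) \in G := subsetP (NC_sub hx) _ wx.
have ue := Gs eG; have we : w < e.2 := Gs wG.
have cuw : connect (adj x) e.1 w.
  have uW : e.1 \in blk y e.2 by rewrite /blk inE connect_symB (connect_edge ey).
  have wW : w \in blk y e.2 by rewrite /blk inE connect_symB (connect_edge wy).
  have := shorten ue we (blk_induced (r := e.2) (NC_sub hy) uW wW).
  apply: connect_sub => a b; rewrite /rW !inE => /and3P[/andP[aW alt] /andP[bW blt] ab].
  apply: connect1.
  have ayb : adj y a b.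
    apply: adj_of_bond => //; apply: connect_trans _ bW; by rewrite connect_symB.
  case/orP: ayb => h; apply/orP; [left|right]; apply/negPn/negP => hn.
    have hin : (a, b) \in y :\: x by rewrite inE hn h.
    by have := emin _ hin; rewrite /= leqNgt blt.
  have hin : (b, a) \in y :\: x by rewrite inE hn h.
  by have := emin _ hin; rewrite /= leqNgt alt.
have : connect (adj x) e.1 e.2 by apply: connect_trans cuw (connect_edge wx).
move=> c; move: ex; rewrite [e]surjective_pairing (NC_bond hx c) // -surjective_pairing. exact: eG.
Qed.


Section Chain.
Variable C : {set edges}.
Hypothesis hC : is_chain (@incl n) (NC G) C.

Definition C' : {set edges} := C :|: [set G].

Lemma C'_NC c : c \in C' -> c \in NC G.
Proof.
rewrite inE => /orP[h|]; last by rewrite inE => /eqP ->; exact: G_NC.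
by have [s _] := hC; exact: (subsetP s).
Qed.

Lemma C'_cmp c c' : c \in C' -> c' \in C' -> (c \subset c') || (c' \subset c).
Proof.
have [s h] := hC.
rewrite !inE => /orP[hc|/eqP ->] /orP[hc'|/eqP ->].
- exact: h.
- by rewrite NC_sub // (subsetP s).
- by rewrite NC_sub ?orbT // (subsetP s).
- by rewrite subxx.
Qed.

Definition PT := ('I_n.+1 * edges)%type.

Definition isdown (D : {set PT}) : bool :=
  [forall p in D, (p.2 \in C') &&
     [forall q : PT, [&& q.1 <= p.1, q.2 \in C' & q.2 \subset p.2] ==> (q \in D)]].

Definition gg (p : PT) : edges := xk p.1 :&: p.2.
Definition phi (D : {set PT}) : edges := lub [set gg p | p in D].
Definition A (D : {set PT}) : {set V} :=
  [set v : V | [exists p in D, (v < p.1) && [exists w : V, (w, v) \in p.2]]].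

Lemma dn_C' (D : {set PT}) (p : PT) : isdown D -> p \in D -> p.2 \in C'.
Proof. by move=> /forallP /(_ p) /implyP h /h /andP[]. Qed.

Lemma dn_cl (D : {set PT}) (p q : PT) : isdown D -> p \in D -> q.1 <= p.1 -> q.2 \in C' -> q.2 \subset p.2 -> q \in D.
Proof.
move=> /forallP /(_ p) /implyP h /h /andP[_ /forallP /(_ q) /implyP H] h1 h2 h3.
by apply: H; rewrite h1 h2 h3.
Qed.

Lemma gg_NC (D : {set PT}) (p : PT) : isdown D -> p \in D -> gg p \in NC G.
Proof. by move=> hD pD; apply: meet_NC; [exact: xk_NC | exact: C'_NC (dn_C' hD pD)]. Qed.

Lemma FF_NC (D : {set PT}) : isdown D -> {subset [set gg p | p in D] <= NC G}.
Proof. by move=> hD g /imsetP[p pD ->]; exact: gg_NC hD pD. Qed.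

Lemma gg_ub (D : {set PT}) (p : PT) : isdown D -> p \in D -> gg p \subset phi D.
Proof.
move=> hD pD; apply: lub_ub; first by apply/imsetP; exists p.
exact: NC_sub (gg_NC hD pD).
Qed.

Lemma phi_NC (D : {set PT}) : phi D \in NC G.
Proof. exact: lub_NC. Qed.

Lemma phi_least (D : {set PT}) (Z : edges) : Z \in NC G -> (forall p, p \in D -> gg p \subset Z) -> phi D \subset Z.
Proof. by move=> hZ H; apply: lub_least => // g /imsetP[p pD ->]; exact: H. Qed.

Lemma max_col (F : {set edges}) c0 : c0 \in F -> F \subset C' ->
  exists2 c, c \in F & forall c', c' \in F -> c' \subset c.
Proof.
move=> c0F sF.
have [c cF cmax] := arg_maxnP (fun c : edges => #|c|) c0F.
exists c => // c' c'F.
case/orP: (C'_cmp (subsetP sF _ cF) (subsetP sF _ c'F)) => // h.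
have := cmax _ c'F => hle.
have : c == c' by rewrite eqEcard h; exact: hle.
by move/eqP => ->.
Qed.

Lemma xk_U (p : edges) (t : nat) : p \in NC G -> xk t \subset U p t.
Proof.
move=> hp; apply/subsetP => e ex; rewrite inE (subsetP (xk_sub t) _ ex) /=.
by apply: connect_edge; rewrite inE ex orbT.
Qed.

Lemma p_U (p : edges) (t : nat) : p \in NC G -> p \subset U p t.
Proof.
move=> hp; apply/subsetP => e ep; rewrite inE (subsetP (NC_sub hp) _ ep) /=.
by apply: connect_edge; rewrite inE ep.
Qed.

Lemma S_phi (D : {set PT}) : isdown D -> S (phi D) = A D.
Proof.
move=> hD; apply/setP => v; apply/idP/idP; last first.
  rewrite !inE => /existsP[p /andP[pD /andP[vp /existsP[w wv]]]].
  apply/existsP; exists w; apply: (subsetP (gg_ub hD pD)).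
  have wG : (w, v) \in G := subsetP (NC_sub (C'_NC (dn_C' hD pD))) _ wv.
  by rewrite /gg !inE wG vp wv.
rewrite inE => /existsP[w hw]; apply/negPn/negP => nA.
have wG : (w, v) \in G := subsetP (NC_sub (phi_NC D)) _ hw.
have wv : w < v := Gs wG.
case: (boolP [exists p in D, v < p.1]) => [/existsP[p0 /andP[p0D vp0]]|hno]; last first.
  have : phi D \subset xk v.
    apply: phi_least; first exact: xk_NC.
    move=> p pD; apply: subset_trans (subsetIl _ _) (xk_mono _).
    by rewrite leqNgt; apply/negP => h; move/existsP: hno; apply; exists p; rewrite pD h.
  by move/subsetP/(_ _ hw); rewrite inE ltnn andbF.
pose F' : {set edges} := [set p.2 | p in D & v < p.1].
have c0F : p0.2 \in F' by apply/imsetP; exists p0; rewrite // inE p0D vp0.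
have sF : F' \subset C' by apply/subsetP => c /imsetP[p]; rewrite inE => /andP[pD _] ->; exact: dn_C' hD pD.
have [cs csF csmax] := max_col c0F sF.
have [ps psD pse] : exists2 ps, (ps \in D) && (v < ps.1) & cs = ps.2.
  by move/imsetP: csF => [ps h ->]; exists ps => //; move: h; rewrite inE.
move/andP: psD => [psD vps].
have csC : cs \in C' by rewrite pse; exact: dn_C' hD psD.
have csNC := C'_NC csC.
have vn : v.+1 < n.+1 by rewrite ltnS ltn_ord.
have qD : (inord v.+1, cs) \in D.
  apply: dn_cl hD psD _ _ _ => //=; last by rewrite pse.
  by rewrite inordK.
have nolow : forall w', (w', v) \notin cs.
  move=> w'; apply/negP => h; move/negP: nA; apply; rewrite inE; apply/existsP; exists (inord v.+1, cs).
  by rewrite qD /= inordK // ltnSn /=; apply/existsP; exists w'.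
have sub : phi D \subset U cs v.
  apply: phi_least; first exact: U_NC.
  move=> p pD; case: (leqP p.1 v) => h.
    exact: subset_trans (subsetIl _ _) (subset_trans (xk_mono h) (xk_U _ csNC)).
  apply: subset_trans (subsetIr _ _) (subset_trans _ (p_U _ csNC)).
  by apply: csmax; apply/imsetP; exists p; rewrite // inE pD h.
have := subsetP sub _ hw; rewrite inE wG /= connect_symB.
move=> /connectP[pp Hp ew].
have step : forall y z, (connect (adj cs) v y /\ v <= y) -> adj (cs :|: xk v) y z ->
    connect (adj cs) v z /\ v <= z.
  move=> y z [cy vy] /orP[] h; move: h; rewrite inE => /orP[] h.
  - have cz : connect (adj cs) v z by apply: connect_trans cy (connect1 _); rewrite /adj h.
    split=> //; rewrite leqNgt; apply/negP => zv.
    by have [w' hw'] := peo csNC cz zv; move: (nolow w'); rewrite hw'.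
  - by move: h; rewrite inE => /andP[h1 /= h2]; have /= := Gs h1; move: vy h2; clear; lia.
  - have cz : connect (adj cs) v z by apply: connect_trans cy (connect1 _); rewrite /adj h orbT.
    split=> //; rewrite leqNgt; apply/negP => zv.
    by have [w' hw'] := peo csNC cz zv; move: (nolow w'); rewrite hw'.
  - by move: h; rewrite inE => /andP[h1 /= h2]; move: vy h2; clear; lia.
have [_ vw] := path_last_inv (P := fun z => connect (adj cs) v z /\ v <= z) step (conj (connect0 _ _) (leqnn _)) Hp.
move: vw; rewrite -ew leqNgt wv //.
Qed.

Lemma isdownI (D1 D2 : {set PT}) : isdown D1 -> isdown D2 -> isdown (D1 :&: D2).
Proof.
move=> h1 h2; apply/forallP => p; apply/implyP; rewrite inE => /andP[p1 p2].
rewrite (dn_C' h1 p1) /=; apply/forallP => q; apply/implyP => /and3P[a b c].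
by rewrite inE (dn_cl h1 p1 a b c) (dn_cl h2 p2 a b c).
Qed.

Lemma isdownU (D1 D2 : {set PT}) : isdown D1 -> isdown D2 -> isdown (D1 :|: D2).
Proof.
move=> h1 h2; apply/forallP => p; apply/implyP; rewrite inE => /orP[p1|p2].
  rewrite (dn_C' h1 p1) /=; apply/forallP => q; apply/implyP => /and3P[a b c].
  by rewrite inE (dn_cl h1 p1 a b c).
rewrite (dn_C' h2 p2) /=; apply/forallP => q; apply/implyP => /and3P[a b c].
by rewrite inE (dn_cl h2 p2 a b c) orbT.
Qed.

Lemma phi_mono (D1 D2 : {set PT}) : isdown D2 -> D1 \subset D2 -> phi D1 \subset phi D2.
Proof.
move=> h2 s12; apply: phi_least; first exact: phi_NC.
move=> p pD; exact: gg_ub h2 (subsetP s12 _ pD).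
Qed.

Lemma A_meet (D1 D2 : {set PT}) : isdown D1 -> isdown D2 -> A D1 :&: A D2 \subset A (D1 :&: D2).
Proof.
move=> h1 h2; apply/subsetP => v; rewrite !inE => /andP[].
move=> /existsP[p1 /andP[p1D /andP[v1 /existsP[w1 hw1]]]].
move=> /existsP[p2 /andP[p2D /andP[v2 /existsP[w2 hw2]]]].
have vn : v.+1 < n.+1 by rewrite ltnS ltn_ord.
have c1 := dn_C' h1 p1D; have c2 := dn_C' h2 p2D.
case/orP: (C'_cmp c1 c2) => h.
  apply/existsP; exists (inord v.+1, p1.2); rewrite inE /= inordK // ltnSn /=.
  rewrite (dn_cl h1 p1D) /= ?inordK ?subxx //.
  rewrite (dn_cl h2 p2D) /= ?inordK //.
  by apply/existsP; exists w1.
apply/existsP; exists (inord v.+1, p2.2); rewrite inE /= inordK // ltnSn /=.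
rewrite (dn_cl h1 p1D) /= ?inordK //.
rewrite (dn_cl h2 p2D) /= ?inordK ?subxx //.
by apply/existsP; exists w2.
Qed.

Lemma phi_meet (D1 D2 : {set PT}) : isdown D1 -> isdown D2 -> phi (D1 :&: D2) = phi D1 :&: phi D2.
Proof.
move=> h1 h2; have h12 := isdownI h1 h2.
apply: S_strict.
- exact: phi_NC.
- by apply: meet_NC; exact: phi_NC.
- by rewrite subsetI !phi_mono ?subsetIl ?subsetIr.
rewrite (S_phi h12); apply: subset_trans (A_meet h1 h2).
by rewrite -(S_phi h1) -(S_phi h2) subsetI !S_mono ?subsetIl ?subsetIr.
Qed.

Lemma phi_join (D1 D2 : {set PT}) : isdown D1 -> isdown D2 ->
  is_join (@incl n) (NC G) (phi D1) (phi D2) (phi (D1 :|: D2)).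
Proof.
move=> h1 h2; have h12 := isdownU h1 h2.
split; rewrite /incl ?phi_NC ?phi_mono ?subsetUl ?subsetUr //.
move=> w hw s1 s2; apply: phi_least => // p; rewrite inE => /orP[pD|pD].
  exact: subset_trans (gg_ub h1 pD) s1.
exact: subset_trans (gg_ub h2 pD) s2.
Qed.

Lemma meet_uniq (X Y z : edges) : X \in NC G -> Y \in NC G ->
  is_meet (@incl n) (NC G) X Y z -> z = X :&: Y.
Proof.
move=> hX hY [hz s1 s2 H]; apply/eqP; rewrite eqEsubset subsetI; rewrite /incl in s1 s2; rewrite s1 s2 /=.
by apply: H; rewrite ?meet_NC // /incl ?subsetIl ?subsetIr.
Qed.

Lemma join_uniq (X Y z z' : edges) :
  is_join (@incl n) (NC G) X Y z -> is_join (@incl n) (NC G) X Y z' -> z = z'.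
Proof.
move=> [hz a b H] [hz' a' b' H']; apply/eqP; rewrite eqEsubset.
by have := H _ hz' a' b'; have := H' _ hz a b; rewrite /incl => -> ->.
Qed.

Definition Q : {set edges} := [set x | [exists D : {set PT}, isdown D && (x == phi D)]].

Lemma QP x : reflect (exists2 D, isdown D & x = phi D) (x \in Q).
Proof.
apply: (iffP idP); rewrite inE.
  by move=> /existsP[D /andP[h /eqP e]]; exists D.
by move=> [D h e]; apply/existsP; exists D; rewrite h e eqxx.
Qed.

Lemma Q_closed : lat_closed (@incl n) (NC G) Q.
Proof.
move=> x y z /QP[D1 h1 ->] /QP[D2 h2 ->] [hm|hj]; apply/QP.
  exists (D1 :&: D2); first exact: isdownI.
  by rewrite (meet_uniq (phi_NC _) (phi_NC _) hm) phi_meet.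
exists (D1 :|: D2); first exact: isdownU.
exact: join_uniq hj (phi_join h1 h2).
Qed.

Lemma Q_NC : Q \subset NC G.
Proof. by apply/subsetP => x /QP[D _ ->]; exact: phi_NC. Qed.

Lemma Mch_Q : Mch \subset Q.
Proof.
apply/subsetP => x /imsetP[i _ ->]; apply/QP.
exists [set p : PT | (p.1 <= i) && (p.2 \in C')].
  apply/forallP => p; apply/implyP; rewrite inE => /andP[pi pC]; rewrite pC /=.
  apply/forallP => q; apply/implyP => /and3P[a b c]; rewrite inE b andbT.
  exact: leq_trans a pi.
apply/eqP; rewrite eqEsubset; apply/andP; split.
  apply: subset_trans (gg_ub (p := (i, G)) _ _).
    by rewrite /gg /=; apply/subsetP => e ex; rewrite inE ex (subsetP (xk_sub _) _ ex).
  apply/forallP => p; apply/implyP; rewrite inE => /andP[pi pC]; rewrite pC /=.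
  apply/forallP => q; apply/implyP => /and3P[a b c]; rewrite inE b andbT.
  exact: leq_trans a pi.
  by rewrite inE leqnn /C' !inE eqxx orbT.
apply: phi_least; first exact: xk_NC.
move=> p; rewrite inE => /andP[pi _]; exact: subset_trans (subsetIl _ _) (xk_mono pi).
Qed.

Lemma C_Q : C \subset Q.
Proof.
apply/subsetP => c cC; apply/QP.
have cNC : c \in NC G by have [s _] := hC; exact: (subsetP s).
have hD : isdown [set p : PT | (p.2 \in C') && (p.2 \subset c)].
  apply/forallP => p; apply/implyP; rewrite inE => /andP[pC pc]; rewrite pC /=.
  apply/forallP => q; apply/implyP => /and3P[a b d]; rewrite inE b /=.
  exact: subset_trans d pc.
exists [set p : PT | (p.2 \in C') && (p.2 \subset c)] => //.
apply/eqP; rewrite eqEsubset; apply/andP; split.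
  apply: subset_trans (gg_ub (p := (ord_max, c)) hD _).
    by rewrite /gg /= xkn; apply/subsetP => e ec; rewrite inE ec (subsetP (NC_sub cNC) _ ec).
  by rewrite inE /C' !inE cC subxx.
apply: phi_least => // p; rewrite inE => /andP[_ pc]; exact: subset_trans (subsetIr _ _) pc.
Qed.

Lemma gen_Q x : in_gen_sublattice (@incl n) (NC G) (Mch :|: C) x -> x \in Q.
Proof.
move=> [_ H]; apply: H; last exact: Q_closed.
  by rewrite subUset Mch_Q C_Q.
exact: Q_NC.
Qed.

Lemma distr : distributive_on (@incl n) (NC G) (in_gen_sublattice (@incl n) (NC G) (Mch :|: C)).
Proof.
move=> x y z a b c d e /gen_Q /QP[D1 h1 ->] /gen_Q /QP[D2 h2 ->] /gen_Q /QP[D3 h3 ->].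
move=> ha hb hc hd he.
have ea : a = phi (D2 :|: D3) by exact: join_uniq ha (phi_join h2 h3).
subst a.
have h23 := isdownU h2 h3.
have -> := meet_uniq (phi_NC _) (phi_NC _) hb.
have ec := meet_uniq (phi_NC _) (phi_NC _) hc.
have ed := meet_uniq (phi_NC _) (phi_NC _) hd.
rewrite -(phi_meet h1 h2) in ec; rewrite -(phi_meet h1 h3) in ed.
subst c d.
rewrite -(phi_meet h1 h23).
have := phi_join (isdownI h1 h2) (isdownI h1 h3).
rewrite -setIUr => hj.
exact: join_uniq hj he.
Qed.

End Chain.

End Main.

Theorem theorem5p11 (n : nat) (G : {set 'I_n * 'I_n}) :
  simple_graph G -> perfectly_labeled G -> crossing_closed G ->
  supersolvable_lattice (@incl n) (NC G).
Proof.
move=> Gs Gpl Gcc; split; first exact: NC_lattice.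
exists (Mch G); split; first exact: Mch_max.
move=> C hC; exact: distr.
Qed.
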